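(* Let $C_{-1},C_0,C_1$ be nonnegative $m\times m$ matrices, where $m$ may be countably infinite, and let $C_*(\theta)=e^{-\theta}C_{-1}+C_0+e^{\theta}C_1$ for $\theta\in\mathbb{R}$. Assume that $C_*(0)^n$ is finite for every $n\in\mathbb{Z}_+$ and that $C_*(0)$ is irreducible. For a positive integer $k$, let $C^{[k]}(\theta)$ be the $k\times k$ block matrix (blocks of size $m\times m$, block indices $1,\dots,k$) whose $(i,i')$ block is the sum of: $C_0$ if $i'=i$; $C_1$ if $i'=i+1$; $C_{-1}$ if $i'=i-1$; $e^{-\theta}C_{-1}$ if $(i,i')=(1,k)$; $e^{\theta}C_1$ if $(i,i')=(k,1)$ (and $O$ if none applies). Then $\mathrm{cp}(C_*(\theta))=\mathrm{cp}(C^{[k]}(k\theta))$ for every $\theta\in\mathbb{R}$.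
   Context: For a nonnegative square matrix $A$ of finite or countable dimension, the convergence parameter is $\mathrm{cp}(A)=\sup\{r\ge0:\sum_{n\ge0}r^nA^n<\infty\text{ elementwise}\}$. Thus $C^{[k]}(\theta)$ is block tridiagonal with $C_{-1},C_0,C_1$ on the sub-, main and super-diagonals, plus corner blocks $e^{-\theta}C_{-1}$ in position $(1,k)$ and $e^{\theta}C_1$ in position $(k,1)$; contributions landing in the same block position (when $k\le2$) are added. *)

(* Defs.v *)
From HB Require Import structures.
From mathcomp Require Import all_boot all_order all_algebra.
From mathcomp Require Import all_classical all_reals all_analysis.
Set Implicit Arguments. Unset Strict Implicit. Unset Printing Implicit Defensive.
Import Order.TTheory GRing.Theory Num.Theory.
Local Open Scope classical_set_scope.
Local Open Scope ring_scope.

(* Entries of products/powers are computed in the extended reals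
   \bar R as (order-independent) sums of nonnegative terms, so they may be +oo. *)

Section NonnegMatrices.
Variables (R : realType) (T : countType).

Definition emx := T -> T -> \bar R.

Definition emx_of (A : T -> T -> R) : emx := fun i j => (A i j)%:E.

Definition emx_mul (A B : emx) : emx :=
  fun i j => (\esum_(l in [set: T]) (A i l * B l j))%E.

Definition emx_id : emx := fun i j => if i == j then 1%E else 0%E.

Fixpoint emx_pow (A : emx) (n : nat) : emx :=
  match n with
  | 0%N => emx_id
  | n'.+1 => emx_mul (emx_pow A n') A
  end.

Definition mx_powers_finite (A : T -> T -> R) : Prop :=
  forall (n : nat) (i j : T), (emx_pow (emx_of A) n i j < +oo)%E.

Definition mx_irreducible (A : T -> T -> R) : Prop :=
  forall i j : T, exists n : nat, (0 < n)%N /\ (0 < emx_pow (emx_of A) n i j)%E.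

Definition cp (A : T -> T -> R) : \bar R :=
  ereal_sup [set (r%:E)%E | r in
    [set r : R | 0 <= r /\ forall i j : T,
        (\esum_(n in [set: nat]) ((r ^+ n)%:E * emx_pow (emx_of A) n i j) < +oo)%E]].

End NonnegMatrices.

Definition Cstar (R : realType) (T : Type) (Cm1 C0 C1 : T -> T -> R) (theta : R)
  : T -> T -> R :=
  fun a b => expR (- theta) * Cm1 a b + C0 a b + expR theta * C1 a b.

(* C^{[k]}(theta): k x k block matrix, block indices 0..k-1 (0-based, i.e.
   block i here is block i+1 of the paper); all applicable contributions are
   added. *)
Definition Cblock (R : realType) (T : Type) (Cm1 C0 C1 : T -> T -> R) (k : nat)
  (theta : R) : ('I_k * T) -> ('I_k * T) -> R :=
  fun p q =>
    let i := nat_of_ord p.1 in let i' := nat_of_ord q.1 in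
    let a := p.2 in let b := q.2 in
      (if i' == i then C0 a b else 0)
    + (if i' == i.+1 then C1 a b else 0)
    + (if i'.+1 == i then Cm1 a b else 0)
    + (if (i == 0%N) && (i' == k.-1) then expR (- theta) * Cm1 a b else 0)
    + (if (i == k.-1) && (i' == 0%N) then expR theta * C1 a b else 0).
Arguments Cblock [R T] Cm1 C0 C1 k theta _ _.

(* Main.v *)
Require Import Defs.
From HB Require Import structures.
From mathcomp Require Import all_boot all_order all_algebra.
From mathcomp Require Import all_classical all_reals all_analysis.
From mathcomp Require Import ring lra.
Import Order.TTheory GRing.Theory Num.Theory.
Local Open Scope classical_set_scope.
Local Open Scope ring_scope.

Lemma mulr_if (R : ringType) (b : bool) (x y : R) :
  x * (if b then y else 0) = if b then x * y else 0.
Proof. by case: b; rewrite ?mulr0. Qed.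

Section E.

Local Open Scope ereal_scope.
Lemma esumZ_le (R : realType) (T : choiceType) (S : set T) (c : R) (f : T -> \bar R) :
  (0 < c)%R -> (forall x, 0 <= f x) ->
  \esum_(i in S) (c%:E * f i) <= c%:E * \esum_(i in S) f i.
Proof.
move=> c0 f0; apply: ge_ereal_sup => _ [X [finX XS] <-].
rewrite fsbig_finite// -ge0_sume_distrr//; apply: lee_wpmul2l; first by rewrite lee_fin ltW.
rewrite -fsbig_finite//; apply: ereal_sup_ubound; exists X => //.
Qed.

Lemma esumZ (R : realType) (T : choiceType) (S : set T) (c : R) (f : T -> \bar R) :
  (0 < c)%R -> (forall x, 0 <= f x) ->
  \esum_(i in S) (c%:E * f i) = c%:E * \esum_(i in S) f i.
Proof.
move=> c0 f0; apply/eqP; rewrite eq_le esumZ_le //=.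
have ci0 : (0 < c^-1)%R by rewrite invr_gt0.
have := @esumZ_le R T S c^-1 (fun i => c%:E * f i) ci0 (fun x => mule_ge0 (ltW (c0 : (0%:E < c%:E)%E)) (f0 x)).
under eq_esum do rewrite muleA -EFinM mulVf ?gt_eqF // mul1e.
move=> h; rewrite -(@lee_pmul2l _ c^-1%:E) // ?lte_fin //.
by rewrite muleA -EFinM mulVf ?gt_eqF // mul1e.
Qed.

End E.
Lemma esum_fin (R: realType) (I: finType) (f: I -> \bar R): (forall i, (0<=f i)%E) -> (\esum_(i in [set: I]) f i = \sum_(i : I) f i)%R.
Proof.
move=> f0; rewrite esum_fset //; last exact: finite_finset.
rewrite -[in RHS]big_enum /= [RHS]fsbig_seq ?enum_uniq //.
have -> : [set` enum (pred_of_simpl (@predT I))] = [set: I].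
  by apply/seteqP; split => x //= _; rewrite mem_enum.
by [].
Qed.

Lemma emx_pow_ge0 (R : realType) (T' : countType) (A : T' -> T' -> R) :
  (forall a b, 0 <= A a b) -> forall m i j, (0 <= emx_pow (emx_of A) m i j)%E.
Proof.
move=> A0; elim=> [|m IH] i j /=.
  by rewrite /emx_id; case: ifP.
by apply: esum_ge0 => l _; apply: mule_ge0 => //; rewrite lee_fin.
Qed.

Section Main.
Variables (R : realType) (T : countType) (Cm1 C0 C1 : T -> T -> R).
Variables (n : nat) (th : R).

Definition w (i j : 'I_n.+1) : R := expR (((j : nat)%:R - (i : nat)%:R) * th).

Local Notation B := (Cblock Cm1 C0 C1 n.+1 (th *+ n.+1)).
Local Notation Cs := (Cstar Cm1 C0 C1 th).

Lemma w_gt0 i j : 0 < w i j. Proof. exact: expR_gt0. Qed.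

Lemma wM i l j : w i l * w l j = w i j.
Proof. rewrite /w -expRD; congr expR; ring. Qed.

Lemma sum_ifeq (m : nat) (F : 'I_n.+1 -> R) :
  \sum_(i < n.+1) (if (i : nat) == m then F i else 0) =
  if (m <= n)%N then F (inord m) else 0.
Proof.
case: leqP => h.
  rewrite (bigD1 (inord m)) //= inordK ?ltnS // eqxx big1 ?addr0 // => i ne.
  case: eqP => // e; exfalso; move/eqP: ne; apply; apply: val_inj => /=.
  by rewrite inordK ?ltnS.
rewrite big1 // => i _; case: eqP => // e; exfalso.
by have := ltn_ord i; rewrite e ltnS leqNgt h.
Qed.

Lemma onestep (l : 'I_n.+1) c b :
  \sum_(i < n.+1) w l i * B (l, c) (i, b) = Cs c b.
Proof.
rewrite /Cblock /=.
under eq_bigr do rewrite !mulrDr !mulr_if.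
rewrite !big_split /= !sum_ifeq.
have hl : (l <= n)%N by rewrite -ltnS.
have wll : w l (inord l) = 1 by rewrite /w inordK // subrr mul0r expR0.
rewrite hl wll mul1r.
have E3 : \sum_(i < n.+1) (if i.+1 == l then w l i * Cm1 c b else 0) =
    if (0 < l)%N then expR (- th) * Cm1 c b else 0.
  case el: (nat_of_ord l) => [|l0]; first by rewrite big1.
  under eq_bigr do rewrite eqSS.
  rewrite sum_ifeq /=.
  have -> : (l0 <= n)%N by apply: ltnW; rewrite -el.
  rewrite /w inordK ?el /=; last by apply: ltnW; rewrite -el.
  by rewrite -natr1; congr (expR _ * _); ring.
have E4 : \sum_(i < n.+1)
     (if (nat_of_ord l == 0%N) && (nat_of_ord i == n)
      then w l i * (expR (th *- n.+1) * Cm1 c b) else 0) =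
    if nat_of_ord l == 0%N then expR (- th) * Cm1 c b else 0.
  have [el|nel] := eqVneq (nat_of_ord l) 0%N; last by rewrite big1.
  rewrite /= sum_ifeq leqnn /w inordK // el mulrA -expRD; congr (expR _ * _).
  rewrite mulrSr -mulr_natl; ring.
have E5 : \sum_(i < n.+1)
     (if (nat_of_ord l == n) && (nat_of_ord i == 0%N)
      then w l i * (expR (th *+ n.+1) * C1 c b) else 0) =
    if nat_of_ord l == n then expR th * C1 c b else 0.
  have [el|nel] := eqVneq (nat_of_ord l) n; last by rewrite big1.
  rewrite /= sum_ifeq // /w inordK // el mulrA -expRD; congr (expR _ * _).
  rewrite mulrSr -mulr_natl; ring.
have E2 : (if (l < n)%N then w l (inord l.+1) * C1 c b else 0) =
   if (l < n)%N then expR th * C1 c b else 0.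
  case: ifP => // h; rewrite /w inordK // -natr1; congr (expR _ * _); ring.
rewrite E2 E3 E4 E5 /Cstar.
have [el|nel] := eqVneq (nat_of_ord l) n.
  rewrite el ltnn.
  have [->|l0] := eqVneq n 0%N; first by rewrite ltnn /=; ring.
  by rewrite lt0n l0 /=; ring.
have -> : (l < n)%N by rewrite ltn_neqAle nel hl.
have [->|l0] := eqVneq (nat_of_ord l) 0%N; first by rewrite ltnn /=; ring.
by rewrite lt0n l0 /=; ring.
Qed.

Hypotheses (Hm1 : forall a b, 0 <= Cm1 a b) (H0 : forall a b, 0 <= C0 a b)
  (H1 : forall a b, 0 <= C1 a b).

Lemma B_ge0 p q : 0 <= B p q.
Proof.
by rewrite /Cblock /=; repeat apply: addr_ge0; case: ifP => // _; rewrite ?mulr_ge0 ?expR_ge0.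
Qed.

Lemma Cs_ge0 a b : 0 <= Cs a b.
Proof.
by rewrite /Cstar; repeat apply: addr_ge0; rewrite ?mulr_ge0 ?expR_ge0.
Qed.

Local Notation PB := (emx_pow (emx_of B)).
Local Notation PC := (emx_pow (emx_of Cs)).

Lemma PB_ge0 m p q : (0 <= PB m p q)%E.
Proof. exact: emx_pow_ge0 B_ge0 m p q. Qed.

Lemma wE_ge0 i j : (0 <= (w i j)%:E)%E. Proof. by rewrite lee_fin ltW // w_gt0. Qed.
Lemma BE_ge0 p q : (0 <= (B p q)%:E)%E. Proof. by rewrite lee_fin B_ge0. Qed.
Lemma CsE_ge0 p q : (0 <= (Cs p q)%:E)%E. Proof. by rewrite lee_fin Cs_ge0. Qed.
Ltac nn := repeat apply: mule_ge0; by [exact: wE_ge0|exact: BE_ge0|exact: CsE_ge0|exact: PB_ge0].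

Lemma pow_rel m (i : 'I_n.+1) a b :
  (\sum_(j < n.+1) (w i j)%:E * PB m (i, a) (j, b) = PC m a b)%E.
Proof.
elim: m i a b => [|m IH] i a b /=.
  rewrite /emx_id (bigD1 i) //= big1 ?adde0; last first.
    by move=> j ji; rewrite xpair_eqE eq_sym (negPf ji) /= mule0.
  by rewrite xpair_eqE eqxx /= /w subrr mul0r expR0 mul1e.
rewrite /emx_mul /emx_of.
have Fge0 : forall p q, (0 <= PB m p q * (B p q)%:E)%E.
  by move=> p q; apply: mule_ge0; [exact: PB_ge0|rewrite lee_fin B_ge0].
transitivity (\sum_(j < n.+1) \esum_(p in [set: 'I_n.+1 * T])
     ((w i j)%:E * (PB m (i, a) p * (B p (j, b))%:E)))%E.
  apply: eq_bigr => j _; rewrite esumZ // ?w_gt0 //.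
  by move=> x; nn.
rewrite -esum_sum; last by move=> p j _ _; nn.
transitivity (\esum_(p in [set: 'I_n.+1 * T])
     ((w i p.1)%:E * PB m (i, a) (p.1, p.2) * (Cs p.2 b)%:E))%E.
  apply: eq_esum => -[l c] _ /=.
  rewrite -(onestep l c b) -sumEFin ge0_sume_distrr; last first.
    by move=> j _; rewrite lee_fin mulr_ge0 ?B_ge0 // ltW // w_gt0.
  apply: eq_bigr => j _; rewrite -(wM i l j) !EFinM.
  by rewrite -!muleA; congr (_ * _)%E; rewrite muleCA.
have -> : [set: 'I_n.+1 * T] = [set: 'I_n.+1] `*`` (fun _ => [set: T]).
  by apply/seteqP; split => -[].
rewrite -(@esum_esum _ _ _ setT (fun _ => setT) (fun l c => (w i l)%:E * PB m (i, a) (l, c) * (Cs c b)%:E)%E); last first.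
  by move=> l c _ _; nn.
rewrite esum_fin; last by move=> l; apply: esum_ge0 => c _; nn.
rewrite -esum_sum; last by move=> c l _ _; nn.
apply: eq_esum => c _.
rewrite -ge0_sume_distrl ?IH //.
by move=> l _; nn.
Qed.

Lemma series_rel (r : R) (i : 'I_n.+1) a b : 0 <= r ->
  (\esum_(m in [set: nat]) ((r ^+ m)%:E * PC m a b) =
   \sum_(j < n.+1) (w i j)%:E * \esum_(m in [set: nat]) ((r ^+ m)%:E * PB m (i, a) (j, b)))%E.
Proof.
move=> r0.
have rE m : (0 <= (r ^+ m)%:E)%E by rewrite lee_fin exprn_ge0.
transitivity (\esum_(m in [set: nat]) \sum_(j < n.+1)
   ((r ^+ m)%:E * ((w i j)%:E * PB m (i, a) (j, b))))%E.
  apply: eq_esum => m _; rewrite -(pow_rel m i) ge0_sume_distrr //.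
  by move=> j _; nn.
rewrite esum_sum; last by move=> m j _ _; apply: mule_ge0 => //; nn.
apply: eq_bigr => j _; rewrite -esumZ ?w_gt0 //; last by move=> m; apply: mule_ge0 => //; nn.
by apply: eq_esum => m _; rewrite muleCA.
Qed.
End Main.

Lemma mul_lty (R : realType) (c : R) (x : \bar R) : 0 < c -> (x < +oo)%E -> (c%:E * x < +oo)%E.
Proof.
move=> c0; case: x => [x||] // _; first by rewrite -EFinM ltry.
by rewrite muleC gt0_mulNye ?lte_fin.
Qed.

Lemma mul_lty_inv (R : realType) (c : R) (x : \bar R) : 0 < c -> (c%:E * x < +oo)%E -> (x < +oo)%E.
Proof.
move=> c0; case: x => [x||] //; first by move=> _; rewrite ltry.
by rewrite muleC gt0_mulye ?lte_fin.
Qed.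

Theorem propositionA1 (R : realType) (T : countType) (Cm1 C0 C1 : T -> T -> R) :
  (forall a b, 0 <= Cm1 a b) -> (forall a b, 0 <= C0 a b) -> (forall a b, 0 <= C1 a b) ->
  mx_powers_finite (Cstar Cm1 C0 C1 0) ->
  mx_irreducible (Cstar Cm1 C0 C1 0) ->
  forall (k : nat), (0 < k)%N ->
  forall theta : R,
    cp (Cstar Cm1 C0 C1 theta) = cp (Cblock Cm1 C0 C1 k (theta *+ k)).
Proof.
move=> Hm1 H0 H1 _ _ [//|n] _ th.
rewrite /cp; congr (ereal_sup _); congr (image _ _).
apply/funext => r; apply/propext; split => -[r0 h]; split => //.
  move=> [i a] [j b].
  apply: (@mul_lty_inv _ (@w R n th i j)); first exact: w_gt0.
  apply: le_lt_trans (h a b).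
  rewrite (@series_rel _ _ _ _ _ _ _ Hm1 H0 H1 _ i) // (bigD1 j) //= leeDl //.
  apply: sume_ge0 => l _; apply: mule_ge0; first exact: wE_ge0.
  apply: esum_ge0 => m _; apply: mule_ge0; first by rewrite lee_fin exprn_ge0.
  exact: (@PB_ge0 _ _ _ _ _ _ _ Hm1 H0 H1).
move=> a b; rewrite (@series_rel _ _ _ _ _ n _ Hm1 H0 H1 _ ord0) //.
apply: lte_sum_pinfty => j _; apply: mul_lty; first exact: w_gt0.
exact: h.
Qed.
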